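(* Let $\chi\in\chi(G)$ be a character and $\lambda\in\Lambda^\chi$. Let $\mathcal M=\{i\in[n]:\langle\chi_i,\lambda\rangle\ge0\}$, and let $A_1,\dots,A_N$ be the subsets of $[n]$ that are minimal with respect to the property $L(A_j)\subset S^\chi_\lambda$. Then $$S^\chi_\lambda=V([n]\setminus\mathcal M)\cap\Big(\bigcup_{j=1}^N D(A_j)\Big)=X_\lambda\cap\Big(\bigcup_{j=1}^ND(A_j)\Big).$$ In particular $S^\chi_\lambda$ is an open subvariety of $X_\lambda$, irreducible, connected and smooth; it is obtained by removing a finite union of linear subspaces from $X_\lambda$, and its Zariski closure is the linear subspace $X_\lambda$.
   Context: $G$ is a diagonalizable algebraic group over $\mathbf C$ acting on $X=\mathbf A^n_{\mathbf C}$ by $g\cdot(x_1,\dots,x_n)=(\chi_1(g)x_1,\dots,\chi_n(g)x_n)$ for fixed characters $\chi_1,\dots,\chi_n$. $\chi(G)$ is the character group, $\Gamma(G)$ the group of one-parameter subgroups, $\langle\chi,\lambda\rangle$ defined by $\chi(\lambda(t))=t^{\langle\chi,\lambda\rangle}$ (extended to real scalars). A norm $\|\cdot\|$ on $\Gamma(G)$ is fixed, induced by an inner product on $\Gamma(G)_{\mathbf R}$ integral on $\Gamma(G)\times\Gamma(G)$. $[n]=\{1,\dots,n\}$. For $x\in X$, $S_x=\{i:x_i\ne0\}$ and $\sigma_x=\{v\in\Gamma(G)_{\mathbf R}:\langle\chi_i,v\rangle\ge0\ \forall i\in S_x\}$; the lattice points of $\sigma_x$ are exactly the $\lambda$ for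 which $\lim_{t\to0}\lambda(t)\cdot x$ exists. $X_\lambda=\{x:\lim_{t\to0}\lambda(t)x\text{ exists}\}=\{x:x_i=0\text{ whenever }\langle\chi_i,\lambda\rangle<0\}$. A point $x$ is $\chi$-unstable if there is $\lambda\in\Gamma(G)$ with $\lim_{t\to0}\lambda(t)x$ existing and $\langle\chi,\lambda\rangle<0$; $X^{us}(\chi)$ is the unstable locus. For $x\in X^{us}(\chi)$ let $\lambda_{\chi,x}$ be the unique indivisible $\lambda\in\Gamma(G)$ with limit existing minimizing $\langle\chi,\lambda\rangle/\|\lambda\|$ over all nonzero such $\lambda$ (Kempf). $\Lambda^\chi=\{\lambda_{\chi,x}:x\in X^{us}(\chi)\}$, $S^\chi_\lambda=\{x\in X^{us}(\chi):\lambda_{\chi,x}=\lambda\}$. For $S\subset[n]$: $V(S)=\{x:x_i=0\ \forall i\in S\}$, $D(S)=\{x:\prod_{i\in S}x_i\ne0\}$, $L(S)=D(S)\cap V([n]\setminus S)$. *)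

(* Defs.v *)
(* Combinatorial model of a diagonalizable group acting
   diagonally on affine space. *)
From HB Require Import structures.
From mathcomp Require Import all_boot all_order all_algebra.
From mathcomp Require Import mpoly.
Set Implicit Arguments. Unset Strict Implicit. Unset Printing Implicit Defensive.
Import Order.TTheory GRing.Theory Num.Theory.
Local Open Scope ring_scope.

(* Gamma(G) = Z^r (row vectors); a character is identified with the linear
   form it induces on Gamma(G), also an element of Z^r. *)

Definition pairing (r : nat) (a l : 'rV[int]_r) : int :=
  \sum_(k < r) a 0 k * l 0 k.

Definition qform (r : nat) (Q : 'M[int]_r) (l : 'rV[int]_r) : int :=
  \sum_(i < r) \sum_(j < r) l 0 i * Q i j * l 0 j.

(* Q is the Gram matrix (in a basis of Gamma(G)) of an inner product on
   Gamma(G)_R which is integral on Gamma(G) x Gamma(G) *)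
Definition integral_inner_product (r : nat) (Q : 'M[int]_r) : Prop :=
  Q^T = Q /\ forall l : 'rV[int]_r, l != 0 -> 0 < qform Q l.

Definition gnorm (C : numClosedFieldType) (r : nat) (Q : 'M[int]_r)
  (l : 'rV[int]_r) : C := sqrtC ((qform Q l)%:~R).

(* lambda is indivisible: not a multiple k*mu with k <> 1 (in particular nonzero) *)
Definition indivisible (r : nat) (l : 'rV[int]_r) : Prop :=
  forall (k : nat) (mu : 'rV[int]_r), l = k%:Z *: mu -> k = 1%N.

(* X_lambda = points x for which lim_{t->0} lambda(t).x exists *)
Definition Xlam (C : numClosedFieldType) (n r : nat) (chis : 'I_n -> 'rV[int]_r)
  (l : 'rV[int]_r) (x : 'I_n -> C) : Prop :=
  forall i : 'I_n, pairing (chis i) l < 0 -> x i = 0.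

Definition unstable (C : numClosedFieldType) (n r : nat) (chis : 'I_n -> 'rV[int]_r)
  (chi : 'rV[int]_r) (x : 'I_n -> C) : Prop :=
  exists l : 'rV[int]_r, Xlam chis l x /\ pairing chi l < 0.

Definition kratio (C : numClosedFieldType) (r : nat) (Q : 'M[int]_r)
  (chi l : 'rV[int]_r) : C := (pairing chi l)%:~R / gnorm C Q l.

Definition is_kempf (C : numClosedFieldType) (n r : nat) (chis : 'I_n -> 'rV[int]_r)
  (Q : 'M[int]_r) (chi : 'rV[int]_r) (x : 'I_n -> C) (l : 'rV[int]_r) : Prop :=
  [/\ indivisible l, Xlam chis l x &
      forall mu : 'rV[int]_r, mu != 0 -> Xlam chis mu x ->
        kratio C Q chi l <= kratio C Q chi mu].

Definition Sstrat (C : numClosedFieldType) (n r : nat) (chis : 'I_n -> 'rV[int]_r)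
  (Q : 'M[int]_r) (chi l : 'rV[int]_r) (x : 'I_n -> C) : Prop :=
  unstable chis chi x /\ is_kempf chis Q chi x l.

Definition Lambda_set (C : numClosedFieldType) (n r : nat) (chis : 'I_n -> 'rV[int]_r)
  (Q : 'M[int]_r) (chi l : 'rV[int]_r) : Prop :=
  exists x : 'I_n -> C, Sstrat chis Q chi l x.

Definition Vset (C : numClosedFieldType) (n : nat) (S : {set 'I_n}) (x : 'I_n -> C) : Prop :=
  forall i, i \in S -> x i = 0.
Definition Dset (C : numClosedFieldType) (n : nat) (S : {set 'I_n}) (x : 'I_n -> C) : Prop :=
  \prod_(i in S) x i != 0.
Definition Lset (C : numClosedFieldType) (n : nat) (S : {set 'I_n}) (x : 'I_n -> C) : Prop :=
  Dset S x /\ Vset (~: S) x.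

Definition minimal_L (C : numClosedFieldType) (n r : nat) (chis : 'I_n -> 'rV[int]_r)
  (Q : 'M[int]_r) (chi l : 'rV[int]_r) (A : {set 'I_n}) : Prop :=
  (forall x : 'I_n -> C, Lset A x -> Sstrat chis Q chi l x) /\
  forall B : {set 'I_n}, B \proper A ->
    ~ (forall x : 'I_n -> C, Lset B x -> Sstrat chis Q chi l x).

Definition Mset (n r : nat) (chis : 'I_n -> 'rV[int]_r) (l : 'rV[int]_r) : {set 'I_n} :=
  [set i | 0 <= pairing (chis i) l].

(* Main.v *)
Require Import Defs.
From HB Require Import structures.
From mathcomp Require Import all_boot all_order all_algebra.
From mathcomp Require Import mpoly.
From Stdlib Require Import Classical.
Set Implicit Arguments. Unset Strict Implicit.
Import Order.TTheory GRing.Theory Num.Theory.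
Local Open Scope ring_scope.
Lemma pairing0 (r : nat) (a : 'rV[int]_r) : pairing a 0 = 0.
Proof. by rewrite /pairing big1 // => k _; rewrite mxE mulr0. Qed.

Lemma gnorm_gt0 (C : numClosedFieldType) (r : nat) (Q : 'M[int]_r) (l : 'rV[int]_r) :
  integral_inner_product Q -> l != 0 -> 0 < Defs.gnorm C Q l.
Proof.
move=> [_ hQ] hl; rewrite /Defs.gnorm sqrtC_gt0 ltr0z; exact: hQ.
Qed.

Lemma gnorm_ge0 (C : numClosedFieldType) (r : nat) (Q : 'M[int]_r) (l : 'rV[int]_r) :
  integral_inner_product Q -> 0 <= Defs.gnorm C Q l.
Proof.
move=> hQ; have [->|hl] := eqVneq l 0.
  by rewrite /Defs.gnorm /qform big1 ?sqrtC0 // => i _; rewrite big1 // => j _; rewrite mxE !mul0r.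
exact/ltW/gnorm_gt0.
Qed.

Lemma mono (C : numClosedFieldType) (n r : nat)
  (chis : 'I_n -> 'rV[int]_r) (Q : 'M[int]_r)
  (hQ : integral_inner_product Q) (chi l : 'rV[int]_r) (y x : 'I_n -> C) :
  Sstrat chis Q chi l y -> (forall i, y i != 0 -> x i != 0) -> Xlam chis l x ->
  Sstrat chis Q chi l x.
Proof.
move=> [[mu0 [hmu0 hneg]] [hind hly hmin]] hsupp hx.
have hXy : forall mu, Xlam chis mu x -> Xlam chis mu y.
  move=> mu hm i hi; have := hm i hi => xi0.
  by apply/eqP; apply: contraT => /hsupp; rewrite xi0 eqxx.
have mu0n0 : mu0 != 0 by apply: contraTneq hneg => ->; rewrite pairing0 ltxx.
have hk0 : kratio C Q chi mu0 < 0.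
  rewrite /kratio pmulr_llt0 ?invr_gt0 ?gnorm_gt0 // ltrz0 //.
have hkl := hmin mu0 mu0n0 hmu0.
have hpl : pairing chi l < 0.
  rewrite ltNge; apply/negP => hp.
  have : 0 <= kratio C Q chi l by rewrite /kratio divr_ge0 ?ler0z ?gnorm_ge0.
  move=> h0; have := le_lt_trans h0 (le_lt_trans hkl hk0); by rewrite ltxx.
split; first by exists l.
split=> // mu mun0 hmu; exact: hmin mun0 (hXy _ hmu).
Qed.

Lemma minimal_exists (n : nat) (P : {set 'I_n} -> Prop) (S : {set 'I_n}) :
  P S -> exists A : {set 'I_n}, A \subset S /\ P A /\ forall B : {set 'I_n}, B \proper A -> ~ P B.
Proof.
move: {2}#|S| (leqnn #|S|) => k; elim: k S => [|k IH] S hk hS.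
  exists S; split=> //; split=> // B /proper_card; rewrite ltnNge.
  by move: hk; rewrite leqn0 => /eqP ->.
destruct (classic (exists B : {set 'I_n}, B \proper S /\ P B)) as [[B [hB hPB]]|hno].
  have hcard := proper_card hB.
  have [A [hAB [hPA hmin]]] := IH B (ltnSE (leq_trans hcard hk)) hPB.
  exists A; split=> //; exact: subset_trans hAB (proper_sub hB).
exists S; split=> //; split=> // B hB hPB; apply: hno; by exists B.
Qed.
Lemma XlamM (C : numClosedFieldType) (n r : nat)
  (chis : 'I_n -> 'rV[int]_r) (l : 'rV[int]_r) (x : 'I_n -> C) :
  Xlam chis l x <-> Vset (~: Mset chis l) x.
Proof.
split=> h i; rewrite ?inE.
  by rewrite -ltNge; apply: h.
by move=> hi; apply: h; rewrite !inE -ltNge.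
Qed.

Lemma part_iff (C : numClosedFieldType) (n r : nat)
  (chis : 'I_n -> 'rV[int]_r) (Q : 'M[int]_r)
  (hQ : integral_inner_product Q) (chi l : 'rV[int]_r) (x : 'I_n -> C) :
  Sstrat chis Q chi l x <->
        Xlam chis l x /\
        exists A : {set 'I_n}, minimal_L C chis Q chi l A /\ Dset A x.
Proof.
split.
- move=> hs; have hx : Xlam chis l x by case: hs => _ [].
  split=> //.
  pose S := [set i | x i != 0].
  have hFS : forall z : 'I_n -> C, Lset S z -> Sstrat chis Q chi l z.
    move=> z [hD hV]; apply: (mono hQ hs).
      move=> i hi; move/prodf_neq0: hD; apply; by rewrite inE.
    move=> i hi; apply: hV; rewrite !inE negbK; by rewrite (hx i hi) eqxx.
  have [A [hAS [hPA hmin]]] := minimal_exists (P :=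
     (fun A : {set 'I_n} => forall z : 'I_n -> C, Lset A z -> Sstrat chis Q chi l z)) hFS.
  exists A; split; first by split.
  apply/prodf_neq0 => i hi; have := subsetP hAS i hi; by rewrite inE.
- move=> [hx [A [[hPA _] hD]]].
  pose z : 'I_n -> C := fun i => if i \in A then 1 else 0.
  have hz : Sstrat chis Q chi l z.
    apply: hPA; split.
      by apply/prodf_neq0 => i hi; rewrite /z hi oner_eq0.
    by move=> i; rewrite inE /z => /negbTE ->.
  apply: (mono hQ hz) => // i; rewrite /z; case: ifP => hi; last by rewrite eqxx.
  move=> _; move/prodf_neq0: hD; by apply.
Qed.
Lemma zariski (C : numClosedFieldType) (n r : nat)
  (chis : 'I_n -> 'rV[int]_r) (Q : 'M[int]_r)
  (hQ : integral_inner_product Q) (chi l : 'rV[int]_r) (x0 : 'I_n -> C)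
  (hx0 : Sstrat chis Q chi l x0) (p : {mpoly C[n]}) :
  (forall x : 'I_n -> C, Sstrat chis Q chi l x -> p.@[x] = 0) ->
  forall x : 'I_n -> C, Xlam chis l x -> p.@[x] = 0.
Proof.
move=> hp x hx.
have hx0X : Xlam chis l x0 by case: hx0 => _ [].
pose T := [set i | x0 i != 0].
pose yp : 'I_n -> {poly C} := fun i => if i \in T then (x i)%:P + 'X else (x i)%:P.
pose yv (t : C) : 'I_n -> C := fun i => if i \in T then x i + t else x i.
pose q : {poly C} := \sum_(m <- msupp p) (p@_m)%:P * \prod_i yp i ^+ m i.
have hq : forall t, q.[t] = p.@[yv t].
  move=> t; rewrite mevalE horner_sum; apply: eq_bigr => m _.
  rewrite hornerM hornerC horner_prod; congr (_ * _); apply: eq_bigr => i _.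
  rewrite horner_exp /yp /yv; case: ifP => _; by rewrite ?hornerD hornerC ?hornerX.
pose prodP : {poly C} := \prod_(i in T) ('X + (x i)%:P).
pose h := q * prodP.
have hh : forall t, h.[t] = 0.
  move=> t; rewrite hornerM horner_prod.
  have [->|hne] := eqVneq (\prod_(i in T) ('X + (x i)%:P).[t]) 0; first by rewrite mulr0.
  rewrite hq hp ?mul0r //; apply: (mono hQ hx0).
    move=> i hi; have hiT : i \in T by rewrite inE.
    move/prodf_neq0: hne => /(_ i hiT); rewrite /yv hiT hornerD hornerX hornerC.
    by rewrite addrC.
  move=> i hi; rewrite /yv; have -> : (i \in T) = false.
    by rewrite inE (hx0X i hi) eqxx.
  exact: hx.
have h0 : h = 0.
  apply/eqP; apply: contraT => hn.
  have := max_poly_roots hn (rs := [seq k%:R | k <- iota 0 (size h)]).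
  rewrite size_map size_iota ltnn; apply.
    by apply/allP => ? /mapP [k _ ->]; rewrite /root hh.
  rewrite map_inj_uniq ?iota_uniq // => a b /eqP; rewrite eqr_nat => /eqP.
  done.
have hP : prodP != 0 by apply: monic_neq0; apply: monic_prod => i _; exact: monicXaddC.
have q0 : q = 0 by move/eqP: h0; rewrite mulf_eq0 (negbTE hP) orbF => /eqP.
rewrite (@meval_eq _ _ x (yv 0)) -?hq ?q0 ?horner0 // => i.
by rewrite /yv; case: ifP; rewrite ?addr0.
Qed.
Unset Implicit Arguments.
Theorem theorem3p17 (C : numClosedFieldType) (n r : nat)
  (chis : 'I_n -> 'rV[int]_r) (Q : 'M[int]_r)
  (hQ : integral_inner_product Q) (chi l : 'rV[int]_r)
  (hl : Lambda_set C chis Q chi l) :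
  (forall x : 'I_n -> C,
     (Sstrat chis Q chi l x <->
        Vset (~: Mset chis l) x /\
        exists A : {set 'I_n}, minimal_L C chis Q chi l A /\ Dset A x) /\
     (Sstrat chis Q chi l x <->
        Xlam chis l x /\
        exists A : {set 'I_n}, minimal_L C chis Q chi l A /\ Dset A x)) /\
  (* the Zariski closure of S^chi_lambda is X_lambda *)
  (forall p : {mpoly C[n]},
     (forall x : 'I_n -> C, Sstrat chis Q chi l x -> p.@[x] = 0) ->
     forall x : 'I_n -> C, Xlam chis l x -> p.@[x] = 0).
Proof.
have [x0 hx0] := hl.
split; last exact: (zariski hQ hx0).
move=> x; split; last exact: part_iff.
rewrite (@part_iff C n r chis Q hQ chi l x); split=> -[h1 h2]; split=> //; exact/XlamM.
Qed.
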